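(* Let $q$ be a positive multiple of $24$, $w_A,w_B:\mathbb{Z}/q\mathbb{Z}\to[0,1]$, and $a,b:\mathbb{Z}/24\mathbb{Z}\to[0,1]$ given by $a(k):=\frac{24}{q}\sum_{x\equiv k\ (\mathrm{mod}\ 24)}w_A(x)$, $b(k):=\frac{24}{q}\sum_{x\equiv k\ (\mathrm{mod}\ 24)}w_B(x)$. Then $$\frac{24}{q}\sum_{t\in\mathbb{Z}/q\mathbb{Z}}(w_A*w_B)(t)f_q(t)\ \ge\ \sum_{t\in\mathbb{Z}/24\mathbb{Z}}(a*b)(t)f_{24}(t)-\frac1{\sqrt5}\sqrt{\sum_{k}\big(a(k)-a(k)^2\big)}\sqrt{\sum_{k}\big(b(k)-b(k)^2\big)}.$$
   Context: For $f,g:\mathbb{Z}/n\mathbb{Z}\to\mathbb{C}$: convolution $(f*g)(x):=\frac1n\sum_{y\in\mathbb{Z}/n\mathbb{Z}}f(y)g(x-y)$, and $f_n(t):=\#\{x\in\mathbb{Z}/n\mathbb{Z}:x^2=t\}$. Sums over $k$ range over $\mathbb{Z}/24\mathbb{Z}$. *)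

(* Defs.v *)
From mathcomp Require Import all_boot all_order all_algebra.
From mathcomp Require Import reals.
Set Implicit Arguments. Unset Strict Implicit. Unset Printing Implicit Defensive.
Import Order.TTheory GRing.Theory Num.Theory.
Local Open Scope ring_scope.

(* A function Z/nZ -> R is encoded as f : nat -> R, of which only the values
   at the canonical representatives 0 <= x < n are used. *)

Definition zconv (R : realType) (n : nat) (f g : nat -> R) (x : nat) : R :=
  n%:R^-1 * \sum_(y < n) f y * g ((x + (n - y)) %% n)%N.

Definition fsq (R : realType) (n : nat) (t : nat) : R :=
  #|[set x : 'I_n | (x * x == t %[mod n])%N]|%:R.

Definition classavg (R : realType) (q : nat) (w : nat -> R) (k : nat) : R :=
  24%:R / q%:R * \sum_(x < q | (x %% 24 == k)%N) w x.

(* Main.v *)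
Require Import Defs.
From mathcomp Require Import all_boot all_order all_algebra.
From mathcomp Require Import reals.
From mathcomp Require Import all_field complex zify ring lra.
Import Order.TTheory GRing.Theory Num.Theory.

Lemma count_bound (m xi : nat) : 0 < m -> ~~ (m %| xi) ->
  5 * (\sum_(h < 24 * m | 24 * m %| 2 * xi * h) 1) <= 24 * m.
Proof.
move=> m0 nd; set q := 24 * m; have q0 : 0 < q by rewrite /q; lia.
set g := gcdn (2 * xi) q.
have g0 : 0 < g by rewrite gcdn_gt0 q0 orbT.
have gq : g %| q by apply: dvdn_gcdr.
set d := q %/ g.
have qdg : q = d * g by rewrite divnK.
have d0 : 0 < d by move: q0; rewrite qdg; case: (d) => //.
have le : \sum_(h < q | q %| 2 * xi * h) 1 <= g.
  rewrite sum1dep_card.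
  have Hd : forall h : 'I_q, h \in [set h : 'I_q | q %| 2 * xi * h] -> d %| h.
    move=> h; rewrite inE => H.
    have : q %| gcdn (2 * xi * h) (q * h) by rewrite dvdn_gcd H dvdn_mulr.
    by rewrite -muln_gcdl -/g {1}qdg (mulnC g) dvdn_pmul2r.
  have := @leq_card_in _ 'I_g (fun h : 'I_q => Ordinal (ltn_pmod (h %/ d) g0)) [set h : 'I_q | q %| 2 * xi * h].
  rewrite card_ord; apply => h1 h2 H1 H2 [].
  have lt : forall h : 'I_q, h %/ d < g.
    by move=> h; rewrite ltn_divLR // mulnC -qdg.
  rewrite !modn_small // => E; apply: val_inj => /=.
  by rewrite -(divnK (Hd _ H1)) -(divnK (Hd _ H2)) E.
apply: leq_trans (leq_mul (leqnn 5) le) _.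
rewrite leqNgt; apply/negP => lt5.
have dlt : d < 5 by rewrite -(ltn_pmul2r g0) -qdg.
have [j Hj] : exists j, 2 * xi = j * g.
  by apply/dvdnP; apply: dvdn_gcdl.
have E : 2 * xi * d = 24 * (j * m).
  by rewrite Hj -mulnA (mulnC g) -qdg /q mulnCA.
move/negP: nd; apply; apply/dvdnP.
move: d0 dlt E; case: (d) => [|[|[|[|[|]]]]] // _ _ => E.
- by exists (12 * j); rewrite -mulnA; lia.
- by exists (6 * j); rewrite -mulnA; lia.
- by exists (4 * j); rewrite -mulnA; lia.
- by exists (3 * j); rewrite -mulnA; lia.
Qed.

Set Implicit Arguments. Unset Strict Implicit. Unset Printing Implicit Defensive.
Local Open Scope ring_scope.

Lemma sum_classes (V : nmodType) n (F : nat -> V) :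
  \sum_(u < n) F u = \sum_(k < 24) \sum_(u < n | (u %% 24 == k)%N) F u.
Proof.
rewrite (partition_big (fun u : 'I_n => Ordinal (ltn_pmod u (isT : (0 < 24)%N))) xpredT) //=.
Qed.

Lemma invol_mod q c u : (c < q)%N -> (u < q)%N ->
  ((c + (q - ((c + (q - u)) %% q))) %% q = u)%N.
Proof.
move=> cq uq; have q0 : (0 < q)%N by lia.
case: (leqP u c) => uc.
  have -> : (c + (q - u) = q + (c - u))%N by lia.
  rewrite modnDl (modn_small (m := (c - u)%N)); last by lia.
  have -> : (c + (q - (c - u)) = q + u)%N by lia.
  by rewrite modnDl modn_small.
rewrite (modn_small (m := (c + (q - u))%N)); last by lia.
have -> : (c + (q - (c + (q - u))) = u)%N by lia.
by rewrite modn_small.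
Qed.

Section Fourier.
Variable R : realType.
Local Notation C := (R[i]).
Local Notation "x %:C" := (real_complex R x) (format "x %:C") : ring_scope.

Lemma prim_root_ex (q : nat) : (0 < q)%N -> {z : C | q.-primitive_root z}.
Proof.
pose p : {poly C} := 'X^q - 1; have [r Dp] := closed_field_poly_normal p.
move=> n_gt0; apply/sigW; rewrite (monicP _) ?monicXnsubC // scale1r in Dp.
have rn1: all q.-unity_root r by apply/allP=> z; rewrite -root_prod_XsubC -Dp.
have sz_r: (q < (size r).+1)%N.
  by rewrite -(size_prod_XsubC r id) -Dp size_XnsubC.
have [|z] := hasP (cyclic.has_prim_root n_gt0 rn1 _ sz_r); last by exists z.
by rewrite -separable_prod_XsubC -Dp cyclotomic.separable_Xn_sub_1 // pnatr_eq0 -lt0n.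
Qed.

Variable q : nat.
Hypothesis q_gt0 : (0 < q)%N.

Lemma geo (w : C) : w ^+ q = 1 ->
  \sum_(x < q) w ^+ x = if w == 1 then q%:R else 0.
Proof.
case: eqP => [->|/eqP w1] wq.
  by rewrite (eq_bigr (fun _ => 1)) ?sumr_const ?card_ord // => i _; rewrite expr1n.
apply/(mulfI (x:=w-1)); first by rewrite subr_eq0.
by rewrite mulr0 -subrX1 wq subrr.
Qed.

Lemma prim_norm1 (w : C) : q.-primitive_root w -> `|w| = 1.
Proof.
move=> wp; apply/eqP; rewrite -(pexpr_eq1 q_gt0) // -normrX.
by rewrite (prim_expr_order wp) normr1.
Qed.

Lemma prim_neq0 (w : C) : q.-primitive_root w -> w != 0.
Proof. by move=> wp; rewrite -normr_eq0 (prim_norm1 wp) oner_eq0. Qed.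

Lemma prim_conj (w : C) : q.-primitive_root w -> w^* = w^-1.
Proof. by move=> wp; rewrite invC_norm (prim_norm1 wp) expr1n invr1 mul1r. Qed.

Lemma real_C (x : R) : (x%:C : C) \is Num.real.
Proof.
rewrite realE.
case: (lerP 0 x) => h; first by rewrite ler0c h.
by rewrite orbC -[0 : C]/((0:R)%:C) lecR ltW.
Qed.

Lemma prim_inv (w : C) : q.-primitive_root w -> q.-primitive_root w^-1.
Proof.
move=> wp; have := exp_prim_root wp (q.-1).
have -> : gcdn q.-1 q = 1%N by rewrite -{2}(prednK q_gt0); apply/eqP; apply: coprimenS.
suff -> : w^-1 = w ^+ q.-1 by rewrite divn1.
apply/(mulfI (prim_neq0 wp)); rewrite -exprS prednK // (prim_expr_order wp) divff //.
exact: prim_neq0.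
Qed.

Lemma parseval (f : nat -> R) (w : C) : q.-primitive_root w ->
  \sum_(k < q) `|\sum_(y < q) (f y)%:C * w ^+ (k * y)| ^+ 2
  = q%:R * (\sum_(y < q) f y ^+ 2)%:C.
Proof.
move=> wp; have w0 := prim_neq0 wp.
under eq_bigr => k _.
  rewrite normCK rmorph_sum mulr_suml.
  under eq_bigr => y _.
    rewrite mulr_sumr.
    under eq_bigr => y' _ do
      rewrite rmorphM rmorphXn /= (conj_Creal (real_C _)) (prim_conj wp) mulrACA
        ![(k * _)%N]mulnC !exprM -exprMn.
    over.
  over.
rewrite exchange_big /=; under eq_bigr => y _ do rewrite exchange_big /=.
under eq_bigr => y _.
  under eq_bigr => y' _.
    rewrite -mulr_sumr geo; last first.
by rewrite exprMn -!exprM !(mulnC _ q) !exprM exprVn (prim_expr_order wp) !expr1n ?invr1 ?mulr1 expr1n mulr1.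
    over.
  rewrite (bigD1 y) //= big1 ?addr0; last first.
    move=> y' ny; case: eqP; last by rewrite mulr0.
    rewrite exprVn => h; move: (divr1_eq h); move/eqP.
    rewrite (eq_prim_root_expr wp) !modn_small // => /eqP /val_inj E.
    by rewrite E eqxx in ny.
  rewrite exprVn divff ?expf_neq0 // eqxx.
  over.
rewrite rmorph_sum mulr_sumr; apply: eq_bigr => y _.
by rewrite rmorphXn mulrC -expr2.
Qed.

Lemma zexp_mod (w : C) : q.-primitive_root w -> forall a b, a = b %[mod q] -> w ^+ a = w ^+ b.
Proof. by move=> wp a b h; apply/eqP; rewrite (eq_prim_root_expr wp) h. Qed.

Lemma expr_cancel (w : C) : q.-primitive_root w -> forall e c A,
  e = c + A %[mod q] -> w ^+ e * w^-1 ^+ A = w ^+ c.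
Proof.
move=> wp e c A h; rewrite (zexp_mod wp h) exprD exprVn mulfK //.
exact/expf_neq0/prim_neq0.
Qed.

Lemma gauss_eq (w : C) (xi : nat) : q.-primitive_root w ->
  `|\sum_(x < q) w ^+ (xi * ((x * x) %% q))| ^+ 2 =
  \sum_(h < q) w ^+ (xi * (h * h)) * (if w ^+ (2 * xi * h) == 1 then q%:R else 0).
Proof.
move=> wp.
transitivity (\sum_(x' < q) \sum_(h < q) w ^+ (xi * (h * h)) * (w ^+ (2 * xi * h)) ^+ x').
  rewrite normCK rmorph_sum /= mulr_sumr; apply: eq_bigr => x' _.
  rewrite rmorphXn /= (prim_conj wp) mulr_suml.
  rewrite (reindex_inj (h := fun h : 'I_q => Ordinal (ltn_pmod (x' + h) q_gt0))) /=;
    last first.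
    move=> h1 h2 [] /eqP; rewrite eqn_modDl !modn_small // => /eqP E.
    exact: val_inj.
  apply: eq_bigr => h _.
  rewrite (expr_cancel wp (c := xi * (h * h) + 2 * xi * h * x')); last first.
    rewrite modnMm modnMmr -modnDmr modnMmr modnDmr; congr (_ %% q)%N; ring.
  by rewrite exprD [w ^+ (2 * xi * h * x')]exprM.
rewrite exchange_big /=; apply: eq_bigr => h _.
rewrite -mulr_sumr geo //.
by rewrite -exprM mulnC exprM (prim_expr_order wp) expr1n.
Qed.

Lemma gauss_sq (w : C) (xi : nat) : q.-primitive_root w ->
  `|\sum_(x < q) w ^+ (xi * ((x * x) %% q))| ^+ 2 <=
  q%:R * (\sum_(h < q | (q %| 2 * xi * h)%N) 1%N)%:R.
Proof.
move=> wp; rewrite -(ger0_norm (exprn_ge0 2 (normr_ge0 _))) gauss_eq //.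
apply: le_trans (ler_norm_sum _ _ _) _.
rewrite natr_sum mulr_sumr [X in _ <= X]big_mkcond /=; apply: ler_sum => h _.
rewrite normrM normrX (prim_norm1 wp) expr1n mul1r (prim_order_dvd wp).
by case: ifP => _; rewrite ?normr0 ?mulr0 // normr_nat mulr1.
Qed.

Lemma exp_shift (w : C) : q.-primitive_root w -> forall xi c u, (u < q)%N ->
  w ^+ (xi * ((c + (q - u)) %% q)) = w ^+ (xi * c) * w^-1 ^+ (xi * u).
Proof.
move=> wp xi c u uq.
rewrite (@zexp_mod w wp (xi * c) (xi * ((c + (q - u)) %% q) + xi * u)).
  by rewrite exprD exprVn mulfK // expf_neq0 // prim_neq0.
rewrite -modnDml modnMmr modnDml -mulnDr -addnA subnK; last by apply: ltnW.
by rewrite mulnDr addnC -modnDml modnMl add0n.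
Qed.

Lemma reindex_sub (V : nmodType) c (F : nat -> V) : (c < q)%N ->
  \sum_(y < q) F ((c + (q - y)) %% q)%N = \sum_(u < q) F u.
Proof.
move=> cq.
rewrite (reindex_inj (h := fun u : 'I_q => Ordinal (ltn_pmod (c + (q - u)) q_gt0))) /=.
  by apply: eq_bigr => u _; rewrite invol_mod.
move=> u1 u2 [] E; apply: val_inj => /=.
by rewrite -(invol_mod cq (ltn_ord u1)) E invol_mod.
Qed.

End Fourier.

Section Main.
Variable R : realType.
Local Notation C := (R[i]).
Local Notation "x %:C" := (real_complex R x) (format "x %:C") : ring_scope.

Lemma fourier_bound (m : nat) (v : nat -> R) : (0 < m)%N ->
  (forall k : 'I_24, \sum_(u < 24 * m | (u %% 24 == k)%N) v u = 0) ->
  \sum_(y < 24 * m) (\sum_(x < 24 * m) v (((x * x) %% (24 * m) + (24 * m - y)) %% (24 * m))%N) ^+ 2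
  <= ((24 * m)%:R ^+ 2 / 5%:R) * \sum_(y < 24 * m) v y ^+ 2.
Proof.
move=> m0 hv; set q := (24 * m)%N; have q0 : (0 < q)%N by rewrite /q; lia.
have [z zp] := prim_root_ex R q0; have zip := prim_inv q0 zp.
set s := fun y : nat => \sum_(x < q) v (((x * x) %% q + (q - y)) %% q)%N.
set V := fun xi : nat => \sum_(u < q) (v u)%:C * z^-1 ^+ (xi * u).
set G := fun xi : nat => \sum_(x < q) z ^+ (xi * ((x * x) %% q)).
have SGV : forall xi : nat, \sum_(y < q) (s y)%:C * z ^+ (xi * y) = G xi * V xi.
  move=> xi; rewrite /s /G mulr_suml.
  under eq_bigr => y _ do rewrite rmorph_sum mulr_suml.
  rewrite exchange_big /=; apply: eq_bigr => x _.
  rewrite /V mulr_sumr.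
  rewrite -(reindex_sub q0 (c := ((x * x) %% q)%N)
     (fun y => (v (((x * x) %% q + (q - y)) %% q)%N)%:C * z ^+ (xi * y))); last exact: ltn_pmod.
  apply: eq_bigr => u _; rewrite invol_mod ?ltn_pmod //.
  by rewrite (exp_shift q0 zp) // mulrCA.
have V0 : forall xi : nat, (m %| xi)%N -> V xi = 0.
  move=> xi /dvdnP [j ->]; rewrite /V (@sum_classes _ q (fun u => (v u)%:C * z^-1 ^+ (j * m * u))) big1 // => k _.
  set w := z^-1 ^+ (j * m).
  have w24 : w ^+ 24 = 1.
    by rewrite /w -exprM -mulnA (mulnC m) -/q mulnC exprM exprVn (prim_expr_order zp) invr1 expr1n.
  under eq_bigr => u /eqP uk do rewrite exprM -(expr_mod u w24) uk.
  by rewrite -mulr_suml -rmorph_sum hv mul0r.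
have key : (q%:R : C) * (\sum_(y < q) s y ^+ 2)%:C <=
    (q%:R ^+ 2 / 5%:R) * (q%:R * (\sum_(y < q) v y ^+ 2)%:C).
  rewrite -(parseval q0 s zp) -(parseval q0 v zip) mulr_sumr.
  apply: ler_sum => k _; rewrite SGV normrM exprMn -/(V k).
  case: (boolP (m %| k)%N) => mk; first by rewrite V0 // normr0 expr0n /= !mulr0.
  apply: ler_wpM2r; first exact: exprn_ge0.
  apply: le_trans (gauss_sq q0 k zp) _.
  have cb := count_bound m k m0 mk; rewrite -/q in cb.
  rewrite ler_pdivlMr ?ltr0n // -natrX -!natrM ler_nat.
  by rewrite expnS -mulnA leq_mul2l (mulnC _ 5) cb orbT.
have E : forall n : nat, (n%:R : C) = (n%:R : R)%:C by move=> n; rewrite rmorph_nat.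
move: key; rewrite !E -rmorphXn -fmorphV -!rmorphM lecR.
by rewrite mulrCA ler_pM2l ?ltr0n.
Qed.

End Main.

Section Real.
Variable R : realType.

Definition Bil (n : nat) (u v : nat -> R) : R :=
  \sum_(x < n) \sum_(y < n) u y * v (((x * x) %% n + (n - y)) %% n)%N.

Lemma conv_sq n (u v : nat -> R) : (0 < n)%N ->
  \sum_(t < n) zconv n u v t * fsq R n t = n%:R^-1 * Bil n u v.
Proof.
move=> n0; rewrite /fsq /zconv /Bil mulr_sumr.
under eq_bigr => t _ do rewrite -sum1_card natr_sum mulr_sumr big_mkcond /=.
rewrite exchange_big /=; apply: eq_bigr => x _.
rewrite [LHS](bigD1 (Ordinal (ltn_pmod (x * x) n0))) //= [X in _ + X = _]big1 ?addr0.
  by rewrite inE /= modn_mod eqxx mulr1.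
move=> t nt; rewrite inE /= (modn_small (ltn_ord t)); case: ifP => // /eqP E.
by case/eqP: nt; apply: val_inj; rewrite /= E.
Qed.

Lemma Bil_ext n (u u' v v' : nat -> R) : (forall y, u y = u' y) -> (forall y, v y = v' y) ->
  Bil n u v = Bil n u' v'.
Proof. by move=> hu hv; apply: eq_bigr => x _; apply: eq_bigr => y _; rewrite hu hv. Qed.

Lemma BilDl n (u1 u2 v : nat -> R) :
  Bil n (fun y => u1 y + u2 y) v = Bil n u1 v + Bil n u2 v.
Proof.
rewrite /Bil -big_split; apply: eq_bigr => x _; rewrite -big_split.
by apply: eq_bigr => y _; rewrite mulrDl.
Qed.

Lemma BilDr n (u v1 v2 : nat -> R) :
  Bil n u (fun y => v1 y + v2 y) = Bil n u v1 + Bil n u v2.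
Proof.
rewrite /Bil -big_split; apply: eq_bigr => x _; rewrite -big_split.
by apply: eq_bigr => y _; rewrite mulrDr.
Qed.

Lemma sum_periodic (V : nmodType) m (F : nat -> V) :
  \sum_(x < 24 * m) F (((x %% 24)%N)) = (\sum_(k < 24) F k) *+ m.
Proof.
elim: m => [|m IH]; first by rewrite muln0 big_ord0.
rewrite mulnS big_split_ord /= IH mulrS; congr (_ + _).
all: by apply: eq_bigr => i _; rewrite ?modnDl ?modn_small.
Qed.

Lemma mod24_sub m c y : (y < 24 * m)%N ->
  (((c + (24 * m - y)) %% (24 * m)) %% 24 = (c %% 24 + (24 - y %% 24)) %% 24)%N.
Proof. by move=> ym; rewrite modn_dvdm ?dvdn_mulr //; lia. Qed.

Lemma zero_left m (u F : nat -> R) c :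
  (forall k : 'I_24, \sum_(y < 24 * m | (y %% 24 == k)%N) u y = 0) ->
  \sum_(y < 24 * m) u y * F ((((c + (24 * m - y)) %% (24 * m)) %% 24)%N) = 0.
Proof.
move=> hu; rewrite (@sum_classes _ (24 * m) (fun y => u y * F ((((c + (24 * m - y)) %% (24 * m)) %% 24)%N))) big1 // => k _.
under eq_bigr => y /eqP yk do rewrite mod24_sub // yk.
by rewrite -mulr_suml hu mul0r.
Qed.

Lemma Bil_alpha_left m (a v : nat -> R) : (0 < m)%N ->
  (forall k : 'I_24, \sum_(y < 24 * m | (y %% 24 == k)%N) v y = 0) ->
  Bil (24 * m) (fun y => a ((y %% 24)%N)) v = 0.
Proof.
move=> m0 hv; have q0 : (0 < 24 * m)%N by lia.
rewrite /Bil big1 // => x _; set c := ((x * x) %% (24 * m))%N.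
have cq : (c < 24 * m)%N by apply: ltn_pmod.
transitivity (\sum_(y < 24 * m) (fun w => a ((((c + (24 * m - w)) %% (24 * m)) %% 24)%N) * v w)
      ((c + (24 * m - y)) %% (24 * m))%N).
  by apply: eq_bigr => y _ /=; rewrite invol_mod.
rewrite (reindex_sub q0 (fun w => a ((((c + (24 * m - w)) %% (24 * m)) %% 24)%N) * v w) cq).
under eq_bigr => y _ do rewrite mulrC.
exact: zero_left.
Qed.

Lemma Bil_alpha_right m (u b : nat -> R) :
  (forall k : 'I_24, \sum_(y < 24 * m | (y %% 24 == k)%N) u y = 0) ->
  Bil (24 * m) u (fun y => b ((y %% 24)%N)) = 0.
Proof. by move=> hu; rewrite /Bil big1 // => x _; apply: zero_left. Qed.

Lemma Bil_alpha_alpha m (a b : nat -> R) :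
  Bil (24 * m) (fun y => a ((y %% 24)%N)) (fun y => b ((y %% 24)%N)) = m%:R ^+ 2 * Bil 24 a b.
Proof.
rewrite /Bil.
pose T := fun i j : nat => a j * b ((((i * i) %% 24 + (24 - j)) %% 24)%N).
transitivity (\sum_(x < 24 * m) \sum_(y < 24 * m) T ((x %% 24)%N) ((y %% 24)%N)).
  apply: eq_bigr => x _; apply: eq_bigr => y _ /=.
  by rewrite /T mod24_sub // modn_dvdm ?dvdn_mulr // modnMm.
rewrite (@sum_periodic _ m (fun i => \sum_(y < 24 * m) T i ((y %% 24)%N))).
under eq_bigr => i _ do rewrite (@sum_periodic _ m (T i)).
by rewrite sumrMnl -mulrnA -[in LHS]mulr_natl natrM -expr2.
Qed.

Lemma class_sum m (w : nat -> R) (k : 'I_24) : (0 < m)%N ->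
  \sum_(y < 24 * m | (y %% 24 == k)%N) w y = m%:R * classavg (24 * m) w k.
Proof.
move=> m0; have hm : (m%:R : R) != 0 by rewrite pnatr_eq0 -lt0n.
by rewrite /classavg natrM; field.
Qed.

Lemma count_class m (k : 'I_24) (c : R) :
  \sum_(y < 24 * m | (y %% 24 == k)%N) c = m%:R * c.
Proof.
rewrite big_mkcond /=.
transitivity (\sum_(y < 24 * m) (fun j : nat => if j == k then c else 0) ((y %% 24)%N)) => //.
rewrite (@sum_periodic _ m (fun j : nat => if j == k then c else 0)) (bigD1 k) //= eqxx big1 ?addr0 ?mulr_natl //.
by move=> j /negbTE; rewrite -val_eqE /= => ->.
Qed.

Lemma phi_class m (w : nat -> R) : (0 < m)%N ->
  forall k : 'I_24, \sum_(y < 24 * m | (y %% 24 == k)%N)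
     (w y - classavg (24 * m) w ((y %% 24)%N)) = 0.
Proof.
move=> m0 k; rewrite sumrB class_sum //.
under eq_bigr => y /eqP -> do [].
by rewrite count_class subrr.
Qed.

Lemma sum_w_alpha m (w f : nat -> R) : (0 < m)%N ->
  \sum_(y < 24 * m) w y * f ((y %% 24)%N) =
  m%:R * \sum_(k < 24) classavg (24 * m) w k * f k.
Proof.
move=> m0; rewrite (@sum_classes _ (24 * m) (fun y => w y * f ((y %% 24)%N))) mulr_sumr.
apply: eq_bigr => k _.
under eq_bigr => y /eqP -> do [].
by rewrite -mulr_suml class_sum // mulrA.
Qed.

Lemma phi_norm m (w : nat -> R) : (0 < m)%N ->
  (forall x : nat, (x < 24 * m)%N -> 0 <= w x <= 1) ->
  \sum_(y < 24 * m) (w y - classavg (24 * m) w ((y %% 24)%N)) ^+ 2 <=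
  m%:R * \sum_(k < 24) (classavg (24 * m) w k - classavg (24 * m) w k ^+ 2).
Proof.
move=> m0 hw; set a := classavg (24 * m) w.
under eq_bigr => y _ do rewrite sqrrB.
rewrite big_split sumrB /= sumrMnl.
have e1 : \sum_(y < 24 * m) w y * a ((y %% 24)%N) = m%:R * \sum_(k < 24) a k ^+ 2.
  by rewrite sum_w_alpha //; congr (_ * _); apply: eq_bigr => k _; rewrite expr2.
have e2 : \sum_(y < 24 * m) a ((y %% 24)%N) ^+ 2 = m%:R * \sum_(k < 24) a k ^+ 2.
  by rewrite (@sum_periodic _ m (fun k => a k ^+ 2)) mulr_natl.
have e3 : \sum_(y < 24 * m) w y ^+ 2 <= \sum_(y < 24 * m) w y.
  apply: ler_sum => y _; have /andP [h0 h1] := hw y (ltn_ord y).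
  by rewrite expr2 ler_piMr.
have e4 : \sum_(y < 24 * m) w y = m%:R * \sum_(k < 24) a k.
  have := sum_w_alpha w (fun _ => 1) m0; under eq_bigr do rewrite mulr1.
  by move=> ->; congr (_ * _); apply: eq_bigr => k _; rewrite mulr1.
rewrite e1 e2 sumrB mulrBr; move: e3; rewrite e4; lra.
Qed.

Lemma cauchy_schwarz n (u v : nat -> R) :
  (\sum_(i < n) u i * v i) ^+ 2 <= (\sum_(i < n) u i ^+ 2) * (\sum_(i < n) v i ^+ 2).
Proof.
have h : 0 <= \sum_(i < n) \sum_(j < n) (u i * v j - u j * v i) ^+ 2.
  by apply: sumr_ge0 => i _; apply: sumr_ge0 => j _; apply: sqr_ge0.
have e : \sum_(i < n) \sum_(j < n) (u i * v j - u j * v i) ^+ 2 =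
   \sum_(i < n) \sum_(j < n) (u i ^+ 2 * v j ^+ 2) + \sum_(i < n) \sum_(j < n) (u j ^+ 2 * v i ^+ 2)
   - (\sum_(i < n) \sum_(j < n) (u i * v i) * (u j * v j)) *+ 2.
  rewrite -big_split -sumrMnl -sumrB; apply: eq_bigr => i _.
  rewrite -big_split -sumrMnl -sumrB; apply: eq_bigr => j _.
  by rewrite mulr2n /=; ring.
have e1 : \sum_(i < n) \sum_(j < n) (u i ^+ 2 * v j ^+ 2) =
   (\sum_(i < n) u i ^+ 2) * (\sum_(i < n) v i ^+ 2).
  by rewrite mulr_suml; apply: eq_bigr => i _; rewrite mulr_sumr.
have e2 : \sum_(i < n) \sum_(j < n) (u j ^+ 2 * v i ^+ 2) =
   (\sum_(i < n) u i ^+ 2) * (\sum_(i < n) v i ^+ 2).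
  by rewrite exchange_big /= e1.
have e3 : \sum_(i < n) \sum_(j < n) (u i * v i) * (u j * v j) = (\sum_(i < n) u i * v i) ^+ 2.
  by rewrite expr2 mulr_suml; apply: eq_bigr => i _; rewrite mulr_sumr.
move: h; rewrite e e1 e2 e3 mulr2n; lra.
Qed.

End Real.


Unset Implicit Arguments.
Theorem mainTheorem7 (R : realType) (q : nat) (wA wB : nat -> R) :
  (0 < q)%N -> (24 %| q)%N ->
  (forall x : nat, (x < q)%N -> 0 <= wA x <= 1) ->
  (forall x : nat, (x < q)%N -> 0 <= wB x <= 1) ->
  let a := classavg q wA in
  let b := classavg q wB in
  24%:R / q%:R * \sum_(t < q) zconv q wA wB t * fsq R q t >=
    \sum_(t < 24) zconv 24 a b t * fsq R 24 t
    - (Num.sqrt 5)^-1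
      * Num.sqrt (\sum_(k < 24) (a k - a k ^+ 2))
      * Num.sqrt (\sum_(k < 24) (b k - b k ^+ 2)).
Proof.
move=> q0 dq hA hB; cbv zeta.
have [m qm] : exists m, q = (24 * m)%N by case/dvdnP: dq => m ->; exists m; rewrite mulnC.
subst q; have m0 : (0 < m)%N by lia.
rewrite !conv_sq //.
set a := classavg (24 * m) wA; set b := classavg (24 * m) wB.
pose phiA := fun y => wA y - a ((y %% 24)%N).
pose phiB := fun y => wB y - b ((y %% 24)%N).
have split : Bil (24 * m) wA wB = m%:R ^+ 2 * Bil 24 a b + Bil (24 * m) phiA phiB.
  rewrite (@Bil_ext _ _ wA (fun y => a ((y %% 24)%N) + phiA y) wB (fun y => b ((y %% 24)%N) + phiB y));
    try by move=> y; rewrite /phiA /phiB addrC subrK.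
  rewrite BilDl (@BilDr R (24 * m) (fun y => a ((y %% 24)%N)) (fun y => b ((y %% 24)%N)) phiB) (@BilDr R (24 * m) phiA (fun y => b ((y %% 24)%N)) phiB) Bil_alpha_alpha Bil_alpha_left ?Bil_alpha_right ?addr0 ?add0r //.
    exact: phi_class.
  exact: phi_class.
set X := Bil (24 * m) phiA phiB.
pose s := fun y : nat => \sum_(x < 24 * m) phiB (((x * x) %% (24 * m) + (24 * m - y)) %% (24 * m))%N.
have hX : X = \sum_(y < 24 * m) phiA y * s y.
  by rewrite /X /Bil exchange_big /=; apply: eq_bigr => y _; rewrite mulr_sumr.
have CS := cauchy_schwarz (24 * m) phiA s; rewrite -hX in CS.
have FB := @fourier_bound R m phiB m0 (phi_class wB m0).
have NA := phi_norm m0 hA; have NB := phi_norm m0 hB.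
rewrite -/a -/b in NA NB.
rewrite split.
set L := Bil 24 a b.
set A := \sum_(i < 24 * m) phiA i ^+ 2 in CS NA.
set S := \sum_(i < 24 * m) s i ^+ 2 in CS FB.
set Bq := \sum_(y < 24 * m) phiB y ^+ 2 in FB NB.
set SA := \sum_(k < 24) (a k - a k ^+ 2) in NA *.
set SB := \sum_(k < 24) (b k - b k ^+ 2) in NB *.
set M := (m%:R : R).
have M0 : 0 < M by rewrite ltr0n.
have A0 : 0 <= A by apply: sumr_ge0 => i _; apply: sqr_ge0.
have S0 : 0 <= S by apply: sumr_ge0 => i _; apply: sqr_ge0.
have B0 : 0 <= Bq by apply: sumr_ge0 => i _; apply: sqr_ge0.
have SA0 : 0 <= SA by rewrite -(pmulr_rge0 _ M0); apply: le_trans NA.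
have SB0 : 0 <= SB by rewrite -(pmulr_rge0 _ M0); apply: le_trans NB.
have r50 : 0 < Num.sqrt (5 : R) by rewrite sqrtr_gt0 ltr0n.
have r52 : Num.sqrt (5 : R) ^+ 2 = 5 by rewrite sqr_sqrtr // ler0n.
have rA2 : Num.sqrt SA ^+ 2 = SA by rewrite sqr_sqrtr.
have rB2 : Num.sqrt SB ^+ 2 = SB by rewrite sqr_sqrtr.
have rA0 : 0 <= Num.sqrt SA by apply: sqrtr_ge0.
have rB0 : 0 <= Num.sqrt SB by apply: sqrtr_ge0.
rewrite natrM -/M in FB *.
set Y := 24 * M ^+ 2 * ((Num.sqrt 5)^-1 * Num.sqrt SA * Num.sqrt SB).
have Y0 : 0 <= Y.
  by rewrite /Y !mulr_ge0 // ?invr_ge0 ?sqrtr_ge0 // exprn_ge0 // ltW.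
have XY : X ^+ 2 <= Y ^+ 2.
  apply: le_trans CS _.
  have e1 : A * S <= (M * SA) * ((24 * M) ^+ 2 / 5 * (M * SB)).
    apply: ler_pM => //; apply: le_trans FB _.
    by apply: ler_wpM2l => //; rewrite divr_ge0 // ?exprn_ge0 // mulr_ge0 // ltW.
  apply: le_trans e1 _.
  rewrite /Y !exprMn exprVn r52 rA2 rB2.
  rewrite le_eqVlt; apply/orP; left; apply/eqP; field.
  by [].
have hXY : - X <= Y.
  apply: le_trans (ler_norm (- X)) _; rewrite normrN.
  by rewrite -(@ler_pXn2r _ 2) // ?nnegrE ?normr_ge0 // real_normK ?num_real.
have e : 24 / (24 * M) * ((24 * M)^-1 * (M ^+ 2 * L + X)) =
   24^-1 * L + X / (24 * M ^+ 2).
  by field; rewrite (gt_eqF M0).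
rewrite e lerD2l ler_pdivlMr; last by rewrite mulr_gt0 // exprn_gt0.
rewrite mulNr.
rewrite lerNl; apply: (le_trans hXY); rewrite le_eqVlt; apply/orP; left; apply/eqP; rewrite /Y expr2; ring.
Qed.
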